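(* Let $G$ be a group with Property RD with respect to a length function $l$ such that no conjugacy class $C(g)$ with $g\ne e$ grows polynomially (for each such $g$ and every polynomial $P$ there are infinitely many $m$ with $|\{h\in C(g):l(h)=m\}|>P(m)$). Then every bounded trace on $C^*_{\mathrm{red}}G$ is a scalar multiple of the canonical trace $\sum c_g g\mapsto c_e$.
   Context: A length function on $G$ is $l:G\to\mathbb{Z}_{\ge0}$ with $l(fg)\le l(f)+l(g)$, $l(g^{-1})=l(g)$, $l(e)=0$, and $l^{-1}(S)$ finite for finite $S$. $\|\sum c_g g\|_{H^s}^2=\sum|c_g|^2(1+l(g))^{2s}$. $G$ has Property RD with respect to $l$ if there are constants $C,s$ with $\|x\|_{C^*_{\mathrm{red}}G}\le C\|x\|_{H^s}$ for all $x\in\mathbb{C}G$. $C(g)$ is the conjugacy class of $g$. A trace is a bounded linear functional $\tau$ with $\tau(ab)=\tau(ba)$. *)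

(* Defs.v *)
From Stdlib Require Import Reals Lra List ClassicalEpsilon.
Import ListNotations.
Open Scope R_scope.

Record Cplx := mkC { re : R; im : R }.
Definition C0 : Cplx := mkC 0 0.
Definition Cadd (a b : Cplx) : Cplx := mkC (re a + re b) (im a + im b).
Definition Cmul (a b : Cplx) : Cplx :=
  mkC (re a * re b - im a * im b) (re a * im b + im a * re b).
Definition Cnorm2 (a : Cplx) : R := re a * re a + im a * im a.
Definition Cabs (a : Cplx) : R := sqrt (Cnorm2 a).

Record Group := {
  gcar :> Type;
  gmul : gcar -> gcar -> gcar;
  ginv : gcar -> gcar;
  gone : gcar;
  gmul_assoc : forall a b c, gmul a (gmul b c) = gmul (gmul a b) c;
  gmul_1l : forall a, gmul gone a = a;
  gmul_1r : forall a, gmul a gone = a;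
  gmul_Vl : forall a, gmul (ginv a) a = gone;
  gmul_Vr : forall a, gmul a (ginv a) = gone
}.

Section G.
Variable G : Group.

Definition geq_dec (a b : G) : {a = b} + {a <> b} :=
  excluded_middle_informative (a = b).

Definition is_length_function (l : G -> nat) : Prop :=
  (forall f g, (l (gmul G f g) <= l f + l g)%nat) /\
  (forall g, l (ginv G g) = l g) /\
  l (gone G) = 0%nat /\
  (forall S : list nat, exists L : list G, forall g, In (l g) S -> In g L).

(* Elements of CG are functions x : G -> C with finite support; a list L
   "supports" x if x vanishes off L. *)
Definition supported (x : G -> Cplx) (L : list G) : Prop :=
  forall g, ~ In g L -> x g = C0.

Definition lsumC (L : list G) (F : G -> Cplx) : Cplx :=
  fold_right (fun g acc => Cadd (F g) acc) C0 (nodup geq_dec L).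
Definition lsumR (L : list G) (F : G -> R) : R :=
  fold_right (fun g acc => F g + acc) 0 (nodup geq_dec L).

(* convolution (product in CG) x * y, given a list Lx supporting x *)
Definition conv (Lx : list G) (x y : G -> Cplx) : G -> Cplx :=
  fun h => lsumC Lx (fun g => Cmul (x g) (y (gmul G (ginv G g) h))).

Definition prodlist (Lx Ly : list G) : list G :=
  flat_map (fun a => map (fun b => gmul G a b) Ly) Lx.

Definition l2sq (L : list G) (f : G -> Cplx) : R := lsumR L (fun g => Cnorm2 (f g)).

(* ||x||_{C*_red G} <= M : the operator of left convolution by x on l^2(G)
   has norm <= M (tested on the dense subspace of finitely supported vectors) *)
Definition red_norm_le (x : G -> Cplx) (Lx : list G) (M : R) : Prop :=
  forall (xi : G -> Cplx) (Lxi : list G), supported xi Lxi ->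
    sqrt (l2sq (prodlist Lx Lxi) (conv Lx x xi)) <= M * sqrt (l2sq Lxi xi).

Definition Hs_norm (l : G -> nat) (s : R) (L : list G) (x : G -> Cplx) : R :=
  sqrt (lsumR L (fun g => Cnorm2 (x g) * Rpower (1 + INR (l g)) (2 * s))).

Definition PropertyRD (l : G -> nat) : Prop :=
  exists Cst s : R, forall (x : G -> Cplx) (Lx : list G), supported x Lx ->
    red_norm_le x Lx (Cst * Hs_norm l s Lx x).

Definition in_conj_class (g h : G) : Prop :=
  exists k : G, h = gmul G (gmul G k g) (ginv G k).

(* real polynomial with coefficient list [a0; a1; ...] *)
Fixpoint peval (P : list R) (t : R) : R :=
  match P with [] => 0 | a :: P' => a + t * peval P' t end.

Definition sphere_count_gt (l : G -> nat) (g : G) (m : nat) (c : R) : Prop :=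
  exists L : list G, NoDup L /\
    (forall h, In h L -> in_conj_class g h /\ l h = m) /\ INR (length L) > c.

Definition not_poly_growth (l : G -> nat) (g : G) : Prop :=
  forall P : list R, forall N : nat, exists m : nat, (N <= m)%nat /\
    sphere_count_gt l g m (peval P (INR m)).

(* bounded traces on C*_red G, described by their restriction to the dense
   subalgebra CG: linear, tracial, bounded for the reduced norm *)
Definition bounded_trace (tau : (G -> Cplx) -> Cplx) : Prop :=
  (forall x y Lx Ly, supported x Lx -> supported y Ly ->
     tau (fun g => Cadd (x g) (y g)) = Cadd (tau x) (tau y)) /\
  (forall (a : Cplx) x Lx, supported x Lx ->
     tau (fun g => Cmul a (x g)) = Cmul a (tau x)) /\
  (forall x y Lx Ly, supported x Lx -> supported y Ly ->
     tau (conv Lx x y) = tau (conv Ly y x)) /\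
  (exists K : R, forall x Lx M, supported x Lx -> red_norm_le x Lx M ->
     Cabs (tau x) <= K * M).

End G.

(* Main.v *)
Require Import Defs.
From Stdlib Require Import Reals List.
From Stdlib Require Import Lra ClassicalEpsilon FunctionalExtensionality.
Import ListNotations.
Open Scope R_scope.

Lemma Cext (a b : Cplx) : re a = re b -> im a = im b -> a = b.
Proof. destruct a, b; simpl; intros; subst; reflexivity. Qed.

Definition one : Cplx := mkC 1 0.

Lemma Cmul_0l a : Cmul C0 a = C0. Proof. apply Cext; simpl; ring. Qed.
Lemma Cmul_0r a : Cmul a C0 = C0. Proof. apply Cext; simpl; ring. Qed.
Lemma Cmul_1l a : Cmul one a = a. Proof. apply Cext; simpl; ring. Qed.
Lemma Cadd_0r a : Cadd a C0 = a. Proof. apply Cext; simpl; ring. Qed.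
Lemma Cadd_0l a : Cadd C0 a = a. Proof. apply Cext; simpl; ring. Qed.
Lemma Cmul_comm a b : Cmul a b = Cmul b a. Proof. apply Cext; simpl; ring. Qed.

Definition delta (G : Group) (k : G) : G -> Cplx :=
  fun h => if geq_dec G h k then one else C0.

Lemma inv_eq (G : Group) (a h b : G) : gmul G (ginv G a) h = b <-> h = gmul G a b.
Proof. split; intro H.
 - subst b. rewrite gmul_assoc, gmul_Vr, gmul_1l. reflexivity.
 - subst h. rewrite gmul_assoc, gmul_Vl, gmul_1l. reflexivity.
Qed.

Lemma nodup1 (G : Group) (k : G) : nodup (geq_dec G) [k] = [k].
Proof. apply nodup_fixed_point. constructor; [simpl; tauto | constructor]. Qed.

Lemma lsumC1 G (k : gcar G) F : lsumC G [k] F = F k.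
Proof. unfold lsumC. rewrite nodup1. simpl. apply Cadd_0r. Qed.

Lemma supp_delta G (k : gcar G) : supported G (delta G k) [k].
Proof. intros g Hg. unfold delta. destruct (geq_dec G g k); [subst; simpl in Hg; tauto | reflexivity]. Qed.

Lemma conv_delta_l G (k : gcar G) y : conv G [k] (delta G k) y = fun h => y (gmul G (ginv G k) h).
Proof. apply functional_extensionality; intro h. unfold conv. rewrite lsumC1. unfold delta.
  destruct (geq_dec G k k); [|congruence]. apply Cmul_1l. Qed.

Lemma tau_conj G tau (htau : bounded_trace G tau) (g k : gcar G) :
  tau (delta G (gmul G (gmul G k g) (ginv G k))) = tau (delta G g).
Proof.
  destruct htau as [_ [_ [Htr _]]].
  pose proof (Htr (delta G k) (delta G (gmul G g (ginv G k))) [k] [gmul G g (ginv G k)]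
     (supp_delta G k) (supp_delta G _)) as E.
  rewrite !conv_delta_l in E.
  assert (E1 : (fun h => delta G (gmul G g (ginv G k)) (gmul G (ginv G k) h)) = delta G (gmul G (gmul G k g) (ginv G k))).
  { apply functional_extensionality; intro h. unfold delta.
    destruct (geq_dec G (gmul G (ginv G k) h) (gmul G g (ginv G k))) as [e|n];
    destruct (geq_dec G h (gmul G (gmul G k g) (ginv G k))) as [e'|n']; auto.
    - exfalso. apply n'. apply (proj1 (inv_eq G k h _)) in e. rewrite e, gmul_assoc. reflexivity.
    - exfalso. apply n. apply inv_eq. rewrite e', gmul_assoc. reflexivity. }
  assert (E2 : (fun h => delta G k (gmul G (ginv G (gmul G g (ginv G k))) h)) = delta G g).
  { apply functional_extensionality; intro h. unfold delta.
    destruct (geq_dec G (gmul G (ginv G (gmul G g (ginv G k))) h) k) as [e|n];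
    destruct (geq_dec G h g) as [e'|n']; auto.
    - exfalso. apply n'. apply (proj1 (inv_eq G _ h _)) in e. rewrite e, <- gmul_assoc, gmul_Vl, gmul_1r. reflexivity.
    - exfalso. apply n. apply inv_eq. rewrite e', <- gmul_assoc, gmul_Vl, gmul_1r. reflexivity. }
  rewrite E1, E2 in E. exact E.
Qed.

Lemma tau_zero G tau (htau : bounded_trace G tau) : tau (fun _ => C0) = C0.
Proof. destruct htau as [_ [Hs _]].
 pose proof (Hs C0 (fun _ => C0) [] (fun g _ => eq_refl)) as E.
 cbv beta in E. rewrite (Cmul_0l C0), Cmul_0l in E. exact E.
Qed.

Lemma tau_decomp G tau (htau: bounded_trace G tau) (lam : Cplx)
  (Hlam : tau (delta G (gone G)) = lam)
  (H0 : forall h, h <> gone G -> tau (delta G h) = C0) :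
  forall Lx x, supported G x Lx -> tau x = Cmul lam (x (gone G)).
Proof.
  induction Lx as [|h L IH]; intros x Hx.
  - assert (x = fun _ => C0) by (apply functional_extensionality; intro g; apply Hx; simpl; tauto).
    subst x. rewrite tau_zero by auto. rewrite Cmul_0r. reflexivity.
  - set (x' := fun g => if geq_dec G g h then C0 else x g).
    assert (Hx' : supported G x' L).
    { intros g Hg. unfold x'. destruct (geq_dec G g h); auto. apply Hx. simpl. intros [e|e]; [congruence|tauto]. }
    assert (Ex : x = fun g => Cadd (Cmul (x h) (delta G h g)) (x' g)).
    { apply functional_extensionality; intro g. unfold x', delta. destruct (geq_dec G g h).
      - subst. rewrite Cmul_comm, Cmul_1l, Cadd_0r; reflexivity.
      - rewrite Cmul_0r, Cadd_0l; reflexivity. }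
    pose proof htau as [Hadd [Hsc _]].
    assert (Hs1 : supported G (fun g => Cmul (x h) (delta G h g)) [h]).
    { intros g Hg. unfold delta. destruct (geq_dec G g h); [subst; simpl in Hg; tauto| apply Cmul_0r]. }
    transitivity (tau (fun g => Cadd (Cmul (x h) (delta G h g)) (x' g))); [f_equal; exact Ex|].
    rewrite (Hadd _ _ [h] L Hs1 Hx').
    rewrite (Hsc (x h) (delta G h) [h] (supp_delta G h)).
    rewrite (IH x' Hx').
    unfold x'. destruct (geq_dec G (gone G) h) as [e|n].
    + subst h. rewrite Hlam. rewrite Cmul_0r, Cadd_0r, Cmul_comm. reflexivity.
    + rewrite H0 by auto. rewrite Cmul_0r, Cadd_0l. reflexivity.
Qed.

Fixpoint padd (P Q : list R) : list R :=
  match P, Q with [], _ => Q | _, [] => P | a::P', b::Q' => (a+b) :: padd P' Q' end.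
Lemma peval_padd P Q t : peval (padd P Q) t = peval P t + peval Q t.
Proof. revert Q; induction P; destruct Q; simpl; try ring. rewrite IHP; ring. Qed.
Fixpoint ppow (d : nat) : list R :=
  match d with O => [1] | S d' => padd (ppow d') (0 :: ppow d') end.
Lemma peval_ppow d t : peval (ppow d) t = (1+t)^d.
Proof. induction d; simpl. ring. rewrite peval_padd. simpl. rewrite IHd. ring. Qed.
Definition pscale (c : R) (P : list R) := map (Rmult c) P.
Lemma peval_pscale c P t : peval (pscale c P) t = c * peval P t.
Proof. induction P; simpl. ring. rewrite IHP. ring. Qed.

Lemma fold_const G (f : gcar G -> R) c L : (forall h, In h L -> f h = c) ->
  fold_right (fun g acc => f g + acc) 0 L = INR (length L) * c.
Proof. induction L; intros H; simpl. ring. rewrite IHL by (intros; apply H; simpl; auto).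
  rewrite H by (simpl; auto). destruct (length L); simpl; ring. Qed.

Definition ind G (L : list (gcar G)) : gcar G -> Cplx :=
  fun h => if in_dec (geq_dec G) h L then one else C0.

Lemma supp_ind G L : supported G (ind G L) L.
Proof. intros g Hg. unfold ind. destruct (in_dec (geq_dec G) g L); tauto. Qed.

Lemma tau_ind G tau (htau : bounded_trace G tau) (g : gcar G) :
  forall L, NoDup L -> (forall h, In h L -> in_conj_class G g h) ->
  tau (ind G L) = mkC (INR (length L) * re (tau (delta G g))) (INR (length L) * im (tau (delta G g))).
Proof.
  induction L as [|h L IH]; intros Hnd Hc.
  - assert (E : ind G [] = fun _ => C0) by (apply functional_extensionality; intro; reflexivity).
    rewrite E, tau_zero by auto. apply Cext; simpl; ring.
  - inversion Hnd; subst.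
    assert (E : ind G (h :: L) = fun x => Cadd (delta G h x) (ind G L x)).
    { apply functional_extensionality; intro x. unfold ind, delta.
      destruct (in_dec (geq_dec G) x (h :: L)) as [i|i];
      destruct (in_dec (geq_dec G) x L) as [j|j];
      destruct (geq_dec G x h) as [e|e]; subst; apply Cext; simpl; try ring;
      simpl in i; intuition congruence. }
    rewrite E. pose proof htau as [Hadd _].
    rewrite (Hadd _ _ [h] L (supp_delta G h) (supp_ind G L)).
    rewrite IH by (auto; intros; apply Hc; simpl; auto).
    destruct (Hc h (or_introl eq_refl)) as [k Hk]. rewrite Hk, tau_conj by auto.
    apply Cext; simpl length; rewrite S_INR; simpl; ring.
Qed.

Lemma sqrt_le_sq X B : 0 <= X -> sqrt X <= B -> X <= B * B.
Proof. intros H1 H2. rewrite <- (sqrt_sqrt X H1).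
  pose proof (sqrt_pos X). apply Rmult_le_compat; lra. Qed.

Theorem mainTheorem8 (G : Group) (l : G -> nat)
  (hl : is_length_function G l)
  (hRD : PropertyRD G l)
  (hgrowth : forall g : G, g <> gone G -> not_poly_growth G l g)
  (tau : (G -> Cplx) -> Cplx)
  (htau : bounded_trace G tau) :
  exists lam : Cplx, forall (x : G -> Cplx) (Lx : list G),
    supported G x Lx -> tau x = Cmul lam (x (gone G)).
Proof.
  exists (tau (delta G (gone G))). intros x Lx Hx.
  apply (tau_decomp G tau htau _ eq_refl) with Lx; auto.
  intros g hg.
  set (t := tau (delta G g)).
  assert (Hn : Cnorm2 t = 0).
  { destruct (Req_dec (Cnorm2 t) 0) as [?|Hne]; auto. exfalso.
    assert (n2pos : 0 < Cnorm2 t).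
    { unfold Cnorm2 in *. destruct (Req_dec (re t) 0); destruct (Req_dec (im t) 0); nra. }
    destruct hRD as [Cst [s HRD]].
    pose proof htau as [_ [_ [_ [K HK]]]].
    destruct (INR_unbounded (2 * s)) as [d Hd].
    set (A := K * Cst).
    set (c := A * A / Cnorm2 t).
    assert (c0 : 0 <= c).
    { unfold c. apply Rmult_le_pos; [nra | left; apply Rinv_0_lt_compat; auto]. }
    destruct (hgrowth g hg (pscale c (ppow d)) 0%nat) as [m [_ [L [Hnd [HL HN]]]]].
    rewrite peval_pscale, peval_ppow in HN.
    set (N := INR (length L)) in *.
    set (X := (1 + INR m) ^ d) in *.
    set (Rp := Rpower (1 + INR m) (2 * s)).
    assert (Hm : 0 <= INR m) by apply pos_INR.
    assert (HRX : Rp <= X).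
    { unfold Rp, X. rewrite <- Rpower_pow by lra. apply Rle_Rpower; lra. }
    assert (Rp0 : 0 < Rp) by (unfold Rp, Rpower; apply exp_pos).
    assert (N0 : 0 <= N) by apply pos_INR.
    assert (Hind := tau_ind G tau htau g L Hnd (fun h Hh => proj1 (HL h Hh))).
    assert (Hhs : Hs_norm G l s L (ind G L) = sqrt (N * Rp)).
    { unfold Hs_norm, lsumR. rewrite (nodup_fixed_point _ Hnd). f_equal.
      apply fold_const. intros h Hh. unfold ind.
      destruct (in_dec (geq_dec G) h L); [|tauto]. destruct (HL h Hh) as [_ ->].
      unfold Rp, Cnorm2, one; simpl; ring. }
    pose proof (HK _ _ _ (supp_ind G L) (HRD _ _ (supp_ind G L))) as Hb.
    rewrite Hhs, Hind in Hb. unfold Cabs in Hb.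
    apply sqrt_le_sq in Hb; [|unfold Cnorm2; simpl; nra].
    assert (E2 : K * (Cst * sqrt (N * Rp)) * (K * (Cst * sqrt (N * Rp))) = A * A * (N * Rp)).
    { rewrite <- (sqrt_sqrt (N * Rp)) at 3 by nra. unfold A; ring. }
    rewrite E2 in Hb. unfold Cnorm2 in Hb; simpl in Hb.
    fold t N in Hb.
    assert (Hb2 : N * N * Cnorm2 t <= A * A * N * Rp).
    { unfold Cnorm2. replace (N * N * (re t * re t + im t * im t)) with
        (N * re t * (N * re t) + N * im t * (N * im t)) by ring. lra. }
    assert (HcX : c * Rp <= c * X) by (apply Rmult_le_compat_l; auto).
    assert (Npos : 0 < N) by nra.
    assert (Hb3 : N * Cnorm2 t <= A * A * Rp).
    { apply Rmult_le_reg_l with N; auto. nra. }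
    assert (Hb4 : N <= c * Rp).
    { unfold c. apply Rmult_le_reg_l with (Cnorm2 t); auto.
      field_simplify; [|lra]. nra. }
    lra. }
  apply Cext; unfold Cnorm2 in Hn; simpl; fold t; nra.
Qed.
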